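(* Let $Q$ be a commutative automorphic loop of nilpotency class $3$, let $x,y\in Q$, and set $u_1=(x,x,y)$, $u_2=(x,y,y)$, $z_2=(x,x,u_2)$, $z_3=(x,y,u_1)$, $z_4=(x,y,u_2)$, $z_5=(y,x,u_1)$, $z_6=(y,x,u_2)$, $z_7=(y,y,u_1)$. Then $z_2=z_3=z_5$ and $z_4=z_6=z_7$.
   Context: A loop is a set with a binary operation such that all left and right translations $L_a:b\mapsto ab$, $R_a:b\mapsto ba$ are bijections and there is a two-sided identity $1$. The inner mapping group is the stabilizer of $1$ in the group generated by all translations; $Q$ is automorphic if all inner mappings are automorphisms. The associator $(a,b,c)$ is defined by $(ab)c=(a(bc))(a,b,c)$. The center $Z(Q)$ is the set of elements fixed by all inner mappings; $Z_0=1$, $Z_{i+1}(Q)$ is the preimage of $Z(Q/Z_i(Q))$, and $Q$ has nilpotency class $n$ if $Z_{n-1}(Q)\neq Q=Z_n(Q)$. *)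

(* Defs.v *)
From Stdlib Require Import List.
Import ListNotations.
Set Implicit Arguments.

(* A loop in the signature ( mul, ldiv, rdiv, 1 ): the equations below say exactly that
   every left translation L_a : b |-> a*b and right translation R_a : b |-> b*a
   is a bijection (with inverses b |-> a\b and b |-> b/a), and 1 is a
   two-sided identity. *)
Record loop := Loop {
  carrier :> Type;
  mul : carrier -> carrier -> carrier;
  ldiv : carrier -> carrier -> carrier;
  rdiv : carrier -> carrier -> carrier;
  one : carrier;
  mul_ldiv : forall a b, mul a (ldiv a b) = b;
  ldiv_mul : forall a b, ldiv a (mul a b) = b;
  rdiv_mul : forall a b, mul (rdiv b a) a = b;
  mul_rdiv : forall a b, rdiv (mul b a) a = b;
  mul1l : forall a, mul one a = a;
  mul1r : forall a, mul a one = a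
}.

Section LoopDefs.
Variable Q : loop.

Inductive transl : Type :=
| TL (a : Q)
| TR (a : Q)
| TLi (a : Q)
| TRi (a : Q).

Definition transl_app (t : transl) (x : Q) : Q :=
  match t with
  | TL a => mul Q a x
  | TR a => mul Q x a
  | TLi a => ldiv Q a x
  | TRi a => rdiv Q x a
  end.

(* A word in the generators; its action is the composite map. The elements of
   the group generated by all translations are exactly the maps [act w]. *)
Definition act (w : list transl) (x : Q) : Q := fold_right transl_app x w.

Definition inner_mapping (f : Q -> Q) : Prop :=
  exists w, f = act w /\ act w (one Q) = one Q.

Definition automorphic : Prop :=
  forall f, inner_mapping f -> forall a b, f (mul Q a b) = mul Q (f a) (f b).

Definition commutative : Prop := forall a b : Q, mul Q a b = mul Q b a.

Definition assoc (a b c : Q) : Q :=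
  ldiv Q (mul Q a (mul Q b c)) (mul Q (mul Q a b) c).

Definition cong (N : Q -> Prop) (a b : Q) : Prop := exists n, N n /\ a = mul Q b n.

(* Z_0 = 1.  Z_{i+1} = preimage of Z(Q/Z_i), where the
   quotient loop Q/Z_i is modelled by Q with equality replaced by the coset
   relation modulo Z_i: its translations (and inverses) are induced by those of Q,
   so its multiplication group consists of the maps induced by the words [act w];
   such a map is an inner mapping of Q/Z_i iff it fixes the coset of 1, and xZ_i
   is central iff it is fixed by all inner mappings of Q/Z_i. *)
Fixpoint Zc (i : nat) : Q -> Prop :=
  match i with
  | 0 => fun x => x = one Q
  | S i' => fun x => forall w : list transl,
      cong (Zc i') (act w (one Q)) (one Q) -> cong (Zc i') (act w x) x
  end.

Definition nilpotency_class (n : nat) : Prop :=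
  (forall x, Zc n x) /\
  match n with
  | 0 => True
  | S n' => exists x, ~ Zc n' x
  end.

End LoopDefs.
Arguments assoc : clear implicits.

(* Main.v *)
Require Import Defs.
From Stdlib Require Import List.
Import ListNotations.

Section S.
Variable Q : loop.
Hypothesis hcomm : commutative Q.
Hypothesis haut : automorphic Q.
Hypothesis hnil : nilpotency_class Q 3.

Local Notation "a ** b" := (mul Q a b) (at level 40, left associativity).
Local Notation ld := (ldiv Q).
Local Notation rd := (rdiv Q).
Local Notation "1" := (one Q).

Lemma lcan a b c : a ** b = a ** c -> b = c.
Proof. intro H. rewrite <- (ldiv_mul Q a b), H. apply ldiv_mul. Qed.
Lemma rcan a b c : b ** a = c ** a -> b = c.
Proof. intro H. rewrite <- (mul_rdiv Q a b), H. apply mul_rdiv. Qed.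
Lemma ld_uniq a b c : a ** c = b -> ld a b = c.
Proof. intro H. rewrite <- H. apply ldiv_mul. Qed.
Lemma rd_uniq a b c : c ** a = b -> rd b a = c.
Proof. intro H. rewrite <- H. apply mul_rdiv. Qed.

Definition inner (w : list (transl Q)) := act w 1 = 1.

Lemma aut_mul w a b : inner w -> act w (a ** b) = act w a ** act w b.
Proof. intro H. apply haut. exists w. split; auto. Qed.
Lemma aut_ld w a b : inner w -> act w (ld a b) = ld (act w a) (act w b).
Proof. intro H. symmetry. apply ld_uniq. rewrite <- aut_mul by auto. rewrite mul_ldiv. auto. Qed.
Lemma aut_rd w a b : inner w -> act w (rd a b) = rd (act w a) (act w b).
Proof. intro H. symmetry. apply rd_uniq. rewrite <- aut_mul by auto. rewrite rdiv_mul. auto. Qed.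
Lemma aut_assoc w a b c : inner w -> act w (assoc Q a b c) = assoc Q (act w a) (act w b) (act w c).
Proof. intro H. unfold assoc. rewrite aut_ld, !aut_mul by auto. auto. Qed.


Definition Lw (a b : Q) : list (transl Q) := [TLi Q (a ** b); TL Q a; TL Q b].
Definition Rw (a b : Q) : list (transl Q) := [TLi Q (a ** b); TR Q b; TL Q a].
Lemma act_Lw a b x : act (Lw a b) x = ld (a ** b) (a ** (b ** x)).
Proof. reflexivity. Qed.
Lemma act_Rw a b x : act (Rw a b) x = ld (a ** b) ((a ** x) ** b).
Proof. reflexivity. Qed.
Lemma inner_Lw a b : inner (Lw a b).
Proof. unfold inner. rewrite act_Lw, mul1r. apply ld_uniq, mul1r. Qed.
Lemma inner_Rw a b : inner (Rw a b).
Proof. unfold inner. rewrite act_Rw, mul1r. apply ld_uniq, mul1r. Qed.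
Lemma inner_nil : inner [].
Proof. reflexivity. Qed.

Definition Zp n := forall w, inner w -> act w n = n.

Lemma zR n a b : Zp n -> a ** (b ** n) = (a ** b) ** n.
Proof. intro Hn. pose proof (Hn (Lw a b) (inner_Lw a b)) as H. rewrite act_Lw in H.
  rewrite <- H at 2. rewrite mul_ldiv. auto. Qed.
Lemma zL n a b : Zp n -> (a ** n) ** b = (a ** b) ** n.
Proof. intro Hn. rewrite hcomm, zR by auto. rewrite (hcomm b a). auto. Qed.
Lemma zM n a b : Zp n -> (a ** n) ** b = a ** (b ** n).
Proof. intro Hn. rewrite zL, zR; auto. Qed.
Lemma zSw n m a : Zp n -> Zp m -> (a ** n) ** m = (a ** m) ** n.
Proof. intros. rewrite zL; auto. Qed.

Lemma Zp_one : Zp 1.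
Proof. intros w Hw. exact Hw. Qed.
Lemma Zp_mul n m : Zp n -> Zp m -> Zp (n ** m).
Proof. intros Hn Hm w Hw. rewrite aut_mul, Hn, Hm; auto. Qed.
Lemma Zp_ld n m : Zp n -> Zp m -> Zp (ld n m).
Proof. intros Hn Hm w Hw. rewrite aut_ld, Hn, Hm; auto. Qed.
Lemma Zp_rd n m : Zp n -> Zp m -> Zp (rd n m).
Proof. intros Hn Hm w Hw. rewrite aut_rd, Hn, Hm; auto. Qed.

Ltac zp := solve [repeat first [assumption | apply Zp_one | apply Zp_rd | apply Zp_ld | apply Zp_mul]].

Definition Z2p u := forall w, inner w -> exists n, Zp n /\ act w u = u ** n.

Lemma Zc1_Zp n : Zc Q 1 n -> Zp n.
Proof. intros H w Hw. destruct (H w) as [m [Hm1 Hm2]].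
  - exists 1. split; auto. rewrite mul1r. exact Hw.
  - subst m. rewrite mul1r in Hm2. auto. Qed.
Lemma Zc1_one : Zc Q 1 1.
Proof. intros w H. exact H. Qed.
Lemma Zc2_Z2p u : Zc Q 2 u -> Z2p u.
Proof. intros H w Hw. destruct (H w) as [n [Hn1 Hn2]].
  - exists 1. split. apply Zc1_one. rewrite mul1r. exact Hw.
  - exists n. split; auto. apply Zc1_Zp; auto. Qed.
Lemma Zc2_one : Zc Q 2 1.
Proof. intros w H. exact H. Qed.
Lemma inner_Z2 w c : inner w -> exists k, Z2p k /\ act w c = c ** k.
Proof. intro Hw. destruct hnil as [H3 _]. destruct (H3 c w) as [k [Hk1 Hk2]].
  - exists 1. split. apply Zc2_one. rewrite mul1r. exact Hw.
  - exists k. split; auto. apply Zc2_Z2p; auto. Qed.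


Lemma S1 q c eta : Z2p eta -> exists n, Zp n /\ (q ** eta) ** c = ((q ** c) ** eta) ** n.
Proof. intro He. destruct (He (Rw q c) (inner_Rw q c)) as [n [Hn E]]. rewrite act_Rw in E.
  exists n. split; auto. rewrite <- (zR n) by auto. rewrite <- E. rewrite mul_ldiv. auto. Qed.
Lemma S2 P s eta : Z2p eta -> exists n, Zp n /\ P ** (s ** eta) = ((P ** s) ** eta) ** n.
Proof. intro He. destruct (He (Lw P s) (inner_Lw P s)) as [n [Hn E]]. rewrite act_Lw in E.
  exists n. split; auto. rewrite <- (zR n) by auto. rewrite <- E. rewrite mul_ldiv. auto. Qed.

Lemma Zp_Z2p n : Zp n -> Z2p n.
Proof. intros Hn w Hw. exists 1. split. apply Zp_one. rewrite Hn, mul1r; auto. Qed.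
Lemma Z2p_mulZ k n : Z2p k -> Zp n -> Z2p (k ** n).
Proof. intros Hk Hn w Hw. destruct (Hk w Hw) as [m [Hm E]]. exists m. split; auto.
  rewrite aut_mul, E, (Hn w Hw) by auto. apply zSw; auto. Qed.

Lemma ld_Z X Y n : Zp n -> ld (X ** n) (Y ** n) = ld X Y.
Proof. intro Hn. apply ld_uniq. rewrite zL by auto. rewrite mul_ldiv. auto. Qed.

Lemma assoc_Z2p a b c : Z2p (assoc Q a b c).
Proof.
  set (W := [TLi Q (b ** c); TR Q c; TR Q b]).
  assert (HW : inner W). { unfold inner, W. simpl. rewrite mul1l. apply ld_uniq, mul1r. }
  destruct (inner_Z2 W a HW) as [k [Hk E]]. unfold W in E. simpl in E.
  assert (E2 : (a ** b) ** c = (b ** c) ** (a ** k)). { rewrite <- E. rewrite mul_ldiv. auto. }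
  destruct (S1 a (b ** c) k Hk) as [n [Hn E3]].
  unfold assoc. rewrite E2, (hcomm (b ** c)), E3, <- (zR n) by auto. rewrite ldiv_mul.
  apply Z2p_mulZ; auto. Qed.

Lemma A1 a b u : Z2p u -> act (Lw a b) u ** assoc Q a b u = u /\ Zp (assoc Q a b u).
Proof. intro Hu. destruct (Hu (Lw a b) (inner_Lw a b)) as [g [Hg E]].
  assert (Ht : assoc Q a b u = rd 1 g).
  { unfold assoc. rewrite act_Lw in E.
    assert (E2 : a ** (b ** u) = ((a ** b) ** u) ** g).
    { rewrite <- (zR g) by auto. rewrite <- E. rewrite mul_ldiv. auto. }
    rewrite E2. apply ld_uniq. rewrite zSw by zp.
    rewrite <- zR by zp. rewrite rdiv_mul, mul1r. auto. }
  rewrite Ht, E. split.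
  - rewrite zSw by zp.
    rewrite <- zR by zp. rewrite rdiv_mul, mul1r. auto.
  - apply Zp_rd; auto using Zp_one. Qed.

Lemma Zp_assoc_mid a b e : Z2p e -> Zp (assoc Q a e b).
Proof. intro He. destruct (He (Rw a b) (inner_Rw a b)) as [n1 [Hn1 E1]].
  destruct (He (Lw a b) (inner_Lw a b)) as [n2 [Hn2 E2]].
  rewrite act_Rw in E1. rewrite act_Lw in E2.
  assert (F1 : (a ** e) ** b = ((a ** b) ** e) ** n1).
  { rewrite <- (zR n1) by auto. rewrite <- E1, mul_ldiv. auto. }
  assert (F2 : a ** (e ** b) = ((a ** b) ** e) ** n2).
  { rewrite <- (zR n2) by auto. rewrite <- E2, mul_ldiv, (hcomm e b). auto. }
  unfold assoc. rewrite F1, F2.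
  replace (ld (((a ** b) ** e) ** n2) (((a ** b) ** e) ** n1)) with (ld n2 n1).
  - apply Zp_ld; auto.
  - symmetry. apply ld_uniq. rewrite <- zR by (apply Zp_ld; auto). rewrite mul_ldiv. auto. Qed.

Lemma assoc_mid_Z a b n : Zp n -> assoc Q a n b = 1.
Proof. intro Hn. unfold assoc. rewrite (hcomm n b), (zR n a b), (zL n a b) by auto. apply ld_uniq. apply mul1r. Qed.
Lemma assoc_r_Z a b n : Zp n -> assoc Q a b n = 1.
Proof. intro Hn. unfold assoc. rewrite (zR n a b) by auto. apply ld_uniq. apply mul1r. Qed.

Definition ZT w := inner w /\ forall c, exists n, Zp n /\ act w c = c ** n.
Definition Good e := forall w, ZT w -> act w e = e.

Lemma Good_Zp n : Zp n -> Good n.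
Proof. intros Hn w [Hw _]. auto. Qed.

Lemma assoc_Z a b c n1 n2 n3 : Zp n1 -> Zp n2 -> Zp n3 ->
  assoc Q (a ** n1) (b ** n2) (c ** n3) = assoc Q a b c.
Proof. intros H1 H2 H3. unfold assoc.
  rewrite (zL n2 b (c ** n3)), (zR n3 b c), (zL n1 a), (zR n2 a), (zR n3 a) by auto.
  rewrite (zL n1 a (b ** n2)), (zR n2 a b), (zL n1 ((a ** b) ** n2)), (zL n2 (a ** b)),
    (zR n3 (a ** b) c) by auto.
  rewrite !ld_Z by auto. auto. Qed.

Lemma Good_assoc a b c : Good (assoc Q a b c).
Proof. intros w [Hw HZ]. rewrite aut_assoc by auto.
  destruct (HZ a) as [n1 [H1 E1]]. destruct (HZ b) as [n2 [H2 E2]]. destruct (HZ c) as [n3 [H3 E3]].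
  rewrite E1, E2, E3. apply assoc_Z; auto. Qed.

Lemma Good_of_mul e u : Good u -> Zp (e ** u) -> Good e.
Proof. intros Hu Heu w Hw. apply (rcan u). rewrite <- (Hu w Hw) at 1.
  rewrite <- aut_mul by (destruct Hw; auto). apply Good_Zp; auto. Qed.

Lemma ZT_Lw s t : Z2p t -> ZT (Lw s t).
Proof. intro Ht. split. apply inner_Lw. intro c.
  destruct (Ht (Rw s c) (inner_Rw s c)) as [n1 [Hn1 E1]].
  destruct (Ht (Lw s c) (inner_Lw s c)) as [n2 [Hn2 E2]].
  rewrite act_Rw in E1. rewrite act_Lw in E2.
  assert (F1 : (s ** t) ** c = ((s ** c) ** t) ** n1).
  { rewrite <- (zR n1) by auto. rewrite <- E1, mul_ldiv. auto. }
  assert (F2 : s ** (t ** c) = ((s ** c) ** t) ** n2).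
  { rewrite <- (zR n2) by auto. rewrite <- E2, mul_ldiv, (hcomm c t). auto. }
  exists (rd n2 n1). split. zp.
  rewrite act_Lw. apply ld_uniq. rewrite (zR (rd n2 n1)) by zp. rewrite F1, F2.
  rewrite <- (zR (rd n2 n1)) by zp. rewrite (hcomm n1), rdiv_mul. auto. Qed.

Lemma good_nuc X t s : Z2p t -> Good s -> X ** (t ** s) = (X ** t) ** s.
Proof. intros Ht Hs. pose proof (Hs _ (ZT_Lw X t Ht)) as E. rewrite act_Lw in E.
  rewrite <- E at 2. rewrite mul_ldiv. auto. Qed.

Lemma good_swap S t e : Z2p t -> Good t -> Z2p e -> Good e -> (S ** t) ** e = (S ** e) ** t.
Proof. intros. rewrite <- (good_nuc S t e), <- (good_nuc S e t) by auto. rewrite (hcomm t e). auto. Qed.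

Lemma outer_swap a b c : assoc Q a b c ** assoc Q c b a = 1.
Proof.
  assert (E : assoc Q c b a = ld ((a ** b) ** c) (a ** (b ** c))).
  { unfold assoc. rewrite (hcomm b a), (hcomm c (a ** b)), (hcomm c b), (hcomm (b ** c) a). auto. }
  rewrite E. apply (lcan (a ** (b ** c))). rewrite good_nuc by (auto using assoc_Z2p; rewrite <- E; apply Good_assoc).
  unfold assoc. rewrite !mul_ldiv, mul1r. auto. Qed.

Definition inv_t (t : transl Q) : transl Q :=
  match t with TL _ a => TLi Q a | TR _ a => TRi Q a | TLi _ a => TL Q a | TRi _ a => TR Q a end.
Definition inv_w (w : list (transl Q)) := rev (map inv_t w).
Lemma act_app (w1 w2 : list (transl Q)) (x : Q) : act (w1 ++ w2) x = act w1 (act w2 x).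
Proof. unfold act. apply fold_right_app. Qed.
Lemma act_inv_l (w : list (transl Q)) (x : Q) : act (inv_w w) (act w x) = x.
Proof. revert x. induction w as [|t w IH]; intro x; auto. unfold inv_w. simpl. rewrite act_app.
  unfold inv_w in IH. simpl. destruct t; simpl; rewrite ?ldiv_mul, ?mul_ldiv, ?mul_rdiv, ?rdiv_mul; apply IH. Qed.
Lemma act_inv_r (w : list (transl Q)) (x : Q) : act w (act (inv_w w) x) = x.
Proof. revert x. induction w as [|t w IH]; intro x; auto. unfold inv_w. simpl. rewrite act_app.
  unfold inv_w in IH. change (act (t :: w) ?z) with (transl_app t (act w z)). rewrite IH.
  destruct t; simpl; rewrite ?ldiv_mul, ?mul_ldiv, ?mul_rdiv, ?rdiv_mul; auto. Qed.
Lemma inner_inv w : inner w -> inner (inv_w w).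
Proof. unfold inner. intro H. rewrite <- H at 1. apply act_inv_l. Qed.

Lemma INV P q eta e : Z2p eta -> Good e -> act (Lw P (q ** eta)) e = act (Lw P q) e.
Proof. intros Heta He.
  assert (Step : forall c, exists m, Zp m /\ act (Lw P (q ** eta)) c = act (Lw P q) c ** m).
  { intro c. rewrite !act_Lw.
    destruct (S1 q c eta Heta) as [n1 [Hn1 F1]].
    destruct (S2 P (q ** c) eta Heta) as [n2 [Hn2 F2]].
    destruct (S2 P q eta Heta) as [n3 [Hn3 F3]].
    set (r := ld (P ** q) (P ** (q ** c))).
    destruct (S1 (P ** q) r eta Heta) as [n4 [Hn4 F4]].
    exists (rd (n2 ** n1) (n4 ** n3)). split. zp.
    assert (Er : P ** (q ** c) = (P ** q) ** r) by (unfold r; rewrite mul_ldiv; auto).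
    set (m := rd (n2 ** n1) (n4 ** n3)).
    assert (Hm : Zp m) by (unfold m; zp).
    apply ld_uniq. rewrite F1, F3, (zR n1 P), F2, Er by auto.
    rewrite (zL n3), (zR m), F4 by auto.
    set (B := ((P ** q) ** r) ** eta).
    rewrite <- (zR m B n4), <- (zR n3 B (n4 ** m)), <- (zR n1 B n2) by zp.
    f_equal. rewrite (hcomm n4 m), <- (zR n3 m) by auto. unfold m. rewrite rdiv_mul. auto. }
  set (psi := inv_w (Lw P q) ++ Lw P (q ** eta)).
  assert (Hpsi : ZT psi).
  { split.
    - unfold inner, psi. rewrite act_app. rewrite (inner_Lw P (q ** eta)).
      apply inner_inv, inner_Lw.
    - intro c. destruct (Step c) as [m [Hm E]]. exists m. split; auto.
      unfold psi. rewrite act_app, E, aut_mul by (apply inner_inv, inner_Lw).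
      rewrite act_inv_l. rewrite (Hm _ (inner_inv _ (inner_Lw P q))). auto. }
  pose proof (He psi Hpsi) as E. unfold psi in E. rewrite act_app in E.
  rewrite <- E at 2. rewrite act_inv_r. auto. Qed.

Lemma Lw_fact P q e : P ** (q ** e) = (P ** q) ** act (Lw P q) e.
Proof. rewrite act_Lw, mul_ldiv. auto. Qed.

Lemma G P d e rho sigma : inner rho -> inner sigma -> Z2p e -> Good e ->
  Z2p (ld (P ** act sigma d) (P ** act rho d)) -> Good (ld (P ** act sigma d) (P ** act rho d)) ->
  ld (P ** act sigma (d ** e)) (P ** act rho (d ** e)) =
  ld (P ** act sigma d) (P ** act rho d) ** ld (P ** act sigma e) (P ** act rho e).
Proof. intros Hr Hs He Ge Zt0 Gt0.
  set (t0 := ld (P ** act sigma d) (P ** act rho d)) in *.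
  set (t1 := ld (P ** act sigma e) (P ** act rho e)).
  destruct (He rho Hr) as [r [Hr' Er]]. destruct (He sigma Hs) as [s [Hs' Es]].
  destruct (inner_Z2 rho d Hr) as [h1 [Hh1 Eh1]].
  destruct (inner_Z2 sigma d Hs) as [h2 [Hh2 Eh2]].
  destruct (He (Lw P d) (inner_Lw P d)) as [g [Hg Eg]].
  assert (I1 : act (Lw P (act rho d)) e = e ** g) by (rewrite Eh1, INV; auto).
  assert (I2 : act (Lw P (act sigma d)) e = e ** g) by (rewrite Eh2, INV; auto).
  assert (Et0 : P ** act rho d = (P ** act sigma d) ** t0) by (unfold t0; rewrite mul_ldiv; auto).
  assert (Et1 : P ** act rho e = (P ** act sigma e) ** t1) by (unfold t1; rewrite mul_ldiv; auto).
  assert (Hrs : r = t1 ** s).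
  { rewrite Er, Es, (zR r), (zR s) in Et1 by auto. apply (lcan (P ** e)).
    rewrite Et1, (zL s), (zR s) by auto. auto. }
  assert (Ht1 : Zp t1). { replace t1 with (rd r s). zp. apply rd_uniq. auto. }
  apply ld_uniq.
  rewrite !aut_mul by auto. rewrite Er, Es.
  rewrite (zR r (act rho d) e), (zR s (act sigma d) e), (zR r P), (zR s P), (Lw_fact P (act rho d) e), (Lw_fact P (act sigma d) e), I1, I2, Et0 by auto.
  set (S := P ** act sigma d).
  rewrite (zR g S), (zR g (S ** t0)), (zR t1 _ t0) by auto.
  rewrite (zL s _ t0), (zL g _ t0) by auto.
  rewrite (good_swap S e t0) by auto.
  rewrite Hrs, (zR s _ t1) by auto. apply zSw; auto. Qed.


Lemma T3 a b d e : Z2p e -> Good e -> assoc Q a b (d ** e) = assoc Q a b d ** assoc Q a b e.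
Proof. intros He Ge.
  assert (H : forall w, assoc Q a b w = ld ((a ** b) ** act (Lw a b) w) ((a ** b) ** act [] w))
    by (intro; rewrite act_Lw, mul_ldiv; reflexivity).
  rewrite !H. apply G; auto using inner_nil, inner_Lw; rewrite <- H; auto using assoc_Z2p, Good_assoc. Qed.

Lemma MID a b d e : Z2p e -> Good e -> assoc Q a (d ** e) b = assoc Q a d b ** assoc Q a e b.
Proof. intros He Ge.
  assert (H : forall w, assoc Q a w b = ld ((a ** b) ** act (Lw a b) w) ((a ** b) ** act (Rw a b) w))
    by (intro; unfold assoc; rewrite act_Lw, act_Rw, !mul_ldiv, (hcomm w b); reflexivity).
  rewrite !H. apply G; auto using inner_Rw, inner_Lw; rewrite <- H; auto using assoc_Z2p, Good_assoc. Qed.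

Lemma INV3 p q eta e : Z2p eta -> Z2p e -> Good e -> assoc Q p (q ** eta) e = assoc Q p q e.
Proof. intros Heta He Ge. apply (lcan (act (Lw p q) e)).
  rewrite <- (INV p q eta e) at 1 by auto. rewrite (proj1 (A1 p (q ** eta) e He)).
  rewrite (proj1 (A1 p q e He)). auto. Qed.

Lemma Elem a b c : Z2p (ld c (act (Lw a b) c)) /\ Zp (ld c (act (Lw a b) c) ** assoc Q a b c).
Proof. destruct (inner_Z2 (Lw a b) c (inner_Lw a b)) as [k [Hk Ek]].
  rewrite Ek, ldiv_mul. split; auto.
  set (S := (a ** b) ** c). set (t := assoc Q a b c).
  assert (E1 : S = (a ** (b ** c)) ** t) by (unfold t, assoc; rewrite mul_ldiv; auto).
  assert (E2 : a ** (b ** c) = (a ** b) ** (c ** k)) by (rewrite <- Ek, act_Lw, mul_ldiv; auto).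
  destruct (S2 (a ** b) c k Hk) as [n [Hn E3]].
  destruct (S2 S k t (assoc_Z2p a b c)) as [m [Hm E4]].
  rewrite E2, E3 in E1. fold S in E1.
  assert (E5 : S ** m = (S ** (k ** t)) ** n).
  { rewrite E4. rewrite E1 at 1. rewrite (zL n), (zSw n m) by auto. auto. }
  rewrite <- (zR n) in E5 by auto. apply lcan in E5.
  replace (k ** t) with (rd m n). zp. apply rd_uniq. auto. Qed.

Lemma Mlemma a b u : Z2p u -> assoc Q a u b = 1 -> assoc Q a b u = assoc Q b a u.
Proof. intros Hu H. unfold assoc in H.
  assert (E : (a ** u) ** b = a ** (u ** b)).
  { rewrite <- (mul1r Q (a ** (u ** b))), <- H, mul_ldiv. auto. }
  rewrite (hcomm u b), (Lw_fact a b u), (hcomm (a ** u) b), (Lw_fact b a u), (hcomm b a) in E.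
  apply lcan in E. apply (lcan (act (Lw a b) u)).
  rewrite (proj1 (A1 a b u Hu)). rewrite <- E. rewrite (proj1 (A1 b a u Hu)). auto. Qed.

Lemma Claim1 a b : assoc Q a a (assoc Q a b b) = assoc Q a b (assoc Q a a b).
Proof.
  assert (La : act (Lw a b) a = a).
  { rewrite act_Lw. apply ld_uniq. rewrite (hcomm b a), (hcomm a (a ** b)). auto. }
  destruct (Elem a b b) as [Z2e Ze].
  set (e2 := ld b (act (Lw a b) b)) in *.
  assert (Ge : Good e2) by (apply (Good_of_mul _ (assoc Q a b b)); auto using Good_assoc).
  assert (Lb : act (Lw a b) b = b ** e2) by (unfold e2; rewrite mul_ldiv; auto).
  destruct (A1 a b (assoc Q a a b) (assoc_Z2p _ _ _)) as [E Hz3].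
  rewrite aut_assoc, La, Lb, T3 in E by auto using inner_Lw.
  destruct (A1 a a e2 Z2e) as [_ HW].
  rewrite <- (zR _ (assoc Q a a b)) in E by auto.
  assert (E' : assoc Q a a e2 ** assoc Q a b (assoc Q a a b) = 1).
  { apply (lcan (assoc Q a a b)). rewrite E, mul1r. auto. } clear E. rename E' into E.
  pose proof (T3 a a e2 (assoc Q a b b) (assoc_Z2p _ _ _) (Good_assoc _ _ _)) as F.
  rewrite assoc_r_Z in F by auto. rewrite <- E in F. apply lcan in F. auto. Qed.

Lemma Claim3 a b : assoc Q a b (assoc Q a a b) = assoc Q b a (assoc Q a a b).
Proof.
  apply Mlemma. apply assoc_Z2p.
  assert (La : act (Lw a a) a = a).
  { rewrite act_Lw. apply ld_uniq. rewrite (hcomm a (a ** a)). auto. }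
  destruct (Elem a a b) as [Z2e Ze].
  set (e1 := ld b (act (Lw a a) b)) in *.
  assert (Ge : Good e1) by (apply (Good_of_mul _ (assoc Q a a b)); auto using Good_assoc).
  assert (Lb : act (Lw a a) b = b ** e1) by (unfold e1; rewrite mul_ldiv; auto).
  destruct (A1 a a (assoc Q a b b) (assoc_Z2p _ _ _)) as [E Hz2].
  rewrite aut_assoc, La, Lb, T3, MID, INV3 in E by auto using inner_Lw.
  pose proof (Zp_assoc_mid a b e1 Z2e) as HM.
  destruct (A1 a b e1 Z2e) as [_ HT].
  rewrite <- (zR _ (assoc Q a b b)), <- (zR _ (assoc Q a b b)) in E by zp.
  match type of E with assoc Q a b b ** ?X = _ =>
    assert (E' : X = 1) by (apply (lcan (assoc Q a b b)); rewrite E, mul1r; auto) end.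
  clear E. rename E' into E.
  rewrite Claim1 in E.
  pose proof (T3 a b e1 (assoc Q a a b) (assoc_Z2p _ _ _) (Good_assoc _ _ _)) as F.
  rewrite assoc_r_Z in F by auto.
  rewrite <- (zR (assoc Q a b (assoc Q a a b))), <- F, mul1r in E by (apply (proj2 (A1 _ _ _ (assoc_Z2p _ _ _)))).
  pose proof (MID a b e1 (assoc Q a a b) (assoc_Z2p _ _ _) (Good_assoc _ _ _)) as F2.
  rewrite assoc_mid_Z, E, mul1l in F2 by auto. auto. Qed.

Lemma inv_unique s t s' t' : s ** t = 1 -> s' ** t' = 1 -> t = t' -> s = s'.
Proof. intros H1 H2 H3. subst. apply (rcan t'). rewrite H1, H2. auto. Qed.

Lemma Swap3 p q a b c : assoc Q p q (assoc Q a b c) ** assoc Q p q (assoc Q c b a) = 1.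
Proof. rewrite <- T3 by auto using assoc_Z2p, Good_assoc. rewrite outer_swap.
  apply assoc_r_Z, Zp_one. Qed.

Lemma main_aux x y :
  (assoc Q x x (assoc Q x y y) = assoc Q x y (assoc Q x x y) /\
   assoc Q x y (assoc Q x x y) = assoc Q y x (assoc Q x x y)) /\
  (assoc Q x y (assoc Q x y y) = assoc Q y x (assoc Q x y y) /\
   assoc Q y x (assoc Q x y y) = assoc Q y y (assoc Q x x y)).
Proof. split; split.
  - apply Claim1.
  - apply Claim3.
  - apply (inv_unique _ _ _ _ (Swap3 x y x y y) (Swap3 y x x y y)). symmetry. apply Claim3.
  - apply (inv_unique _ _ _ _ (Swap3 y x x y y) (Swap3 y y x x y)). symmetry. apply Claim1.
Qed.

End S.

Theorem lemma4p1 (Q : loop) (hcomm : commutative Q) (haut : automorphic Q)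
  (hnil : nilpotency_class Q 3) (x y : Q) :
  let u1 := assoc Q x x y in
  let u2 := assoc Q x y y in
  let z2 := assoc Q x x u2 in
  let z3 := assoc Q x y u1 in
  let z4 := assoc Q x y u2 in
  let z5 := assoc Q y x u1 in
  let z6 := assoc Q y x u2 in
  let z7 := assoc Q y y u1 in
  (z2 = z3 /\ z3 = z5) /\ (z4 = z6 /\ z6 = z7).
Proof. cbv zeta. apply main_aux; auto. Qed.
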